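(* Let $0<c<1$ and let $m\in\mathcal P$ be such that $\mathcal F_c(m)=m$ and $m(x,y)\ge|obs(x)-obs(y)|$ for all $x,y\in E$. Then $m\ge\overline\delta^c$ pointwise.
   Context: Standing setting (diffusion): $E$ is a locally compact Hausdorff space with a countable base, equipped with its Borel $\sigma$-algebra and a fixed $1$-bounded metric $\Delta$ generating its topology (so $E$ is Polish). $(P_t)_{t\ge0}$ is a family of Markov kernels on $E$ obtained from a Feller–Dynkin semigroup $(\hat P_t)_{t\ge0}$ on $C_0(E)$ via $\hat P_t f(x)=\int f(y)\,P_t(x,\mathrm dy)$; the process is honest, i.e. $P_t(x,E)=1$ for all $t\ge0,x\in E$, and $P_0(x)=\delta_x$. We write $P_t(x)$ for the probability measure $P_t(x,\cdot)$. $\Omega$ is the space of continuous trajectories $\omega:[0,\infty)\to E$, with the topology of the uniform metric $U(\Delta)(\omega,\omega')=\sup_{t\ge0}\Delta(\omega(t),\omega'(t))$, assumed Polish; for each $x\in E$, $\mathbb P^x$ is the Borel probability measure on $\Omega$ of the canonical process started at $x$ (so $\omega(0)=x$ a.s. and the finite-dimensional distributions are given by the kernels $P_t$; in particular the law of $\omega(t)$ under $\mathbb P^x$ is $P_t(x)$). The map $x\mapsto\mathbb P^x$ is weakly continuous (hence so is $x\mapsto P_t(x)$ for each $t$). A continuous function $obs:E\to[0,1]$ is fixed. Transport: for Borel probability measures $\mu,\nu$ on a Polish space $X$, $\Gamma(\mu,\nu)$ is the set of couplings; for lower semicontinuous $c:X\times X\to[0,1]$, $W(c)(\mu,\nu)=\min_{\gamma\in\Gamma(\mu,\nu)}\int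 c\,\mathrm d\gamma$. Lattices: $\mathcal M$ is the set of $1$-bounded pseudometrics on $E$ ordered pointwise; $\mathcal P\subseteq\mathcal M$ consists of those that are lower semicontinuous as functions $E\times E\to[0,1]$ (for the topology of $\Delta$); $\mathcal C\subseteq\mathcal P$ consists of those that are continuous. Functional: for $0<c\le1$ and $m\in\mathcal P$, $\mathcal F_c(m)(x,y)=\sup_{t\ge0} c^t\,W(m)(P_t(x),P_t(y))$. Sequence: for $0<c<1$, $\delta^c_0(x,y)=|obs(x)-obs(y)|$ and $\delta^c_{n+1}=\mathcal F_c(\delta^c_n)$ (each $\delta^c_n$ lies in $\mathcal C$, since $\mathcal F_c$ maps $\mathcal C$ into $\mathcal C$ for $c<1$, so the recursion is well defined); the sequence is pointwise non-decreasing and $\overline\delta^c=\sup_n\delta^c_n$. *)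

(* Defs.v *)
From HB Require Import structures.
From mathcomp Require Import all_boot all_order all_algebra.
From mathcomp Require Import all_classical all_reals all_analysis.
From mathcomp Require Import measurable_realfun lebesgue_integral.
Set Implicit Arguments. Unset Strict Implicit. Unset Printing Implicit Defensive.
Import Order.TTheory GRing.Theory Num.Theory.
Import numFieldNormedType.Exports.
Local Open Scope classical_set_scope.
Local Open Scope ring_scope.

Section Defs.
Context {R : realType} {E : ptopologicalType}.

Definition Borel := g_sigma_algebraType (@open E).

Definition vanish_at_infinity (f : E -> R) :=
  forall e : R, 0 < e -> exists2 K : set E, compact K &
    forall x, ~ K x -> `|f x| < e.
Definition C0 (f : E -> R) := continuous f /\ vanish_at_infinity f.

Definition integ (mu : probability Borel R) (f : E -> R) : R :=
  fine (\int[mu]_y (f y)%:E)%E.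

(* Standing assumptions on the Markov kernels (P_t): honest Markov kernels,
   P_0(x) = delta_x, Chapman-Kolmogorov, Feller-Dynkin on C_0(E),
   weak continuity of x |-> P_t(x). *)
Definition feller_markov (P : R -> E -> probability Borel R) :=
  [/\ (forall t (A : set Borel), 0 <= t -> measurable A ->
         measurable_fun [set: Borel] (fun x : Borel => P t x A)),
      (forall x (A : set Borel), measurable A -> P 0 x A = \d_(x : Borel) A),
      (forall s t x (A : set Borel), 0 <= s -> 0 <= t -> measurable A ->
         P (s + t) x A = (\int[P s x]_y P t y A)%E) &
    [/\ (forall t f, 0 <= t -> C0 f -> C0 (fun x => integ (P t x) f)),
      (forall f, C0 f -> forall e : R, 0 < e ->
         exists2 d : R, 0 < d & forall t x, 0 <= t -> t < d ->
           `|integ (P t x) f - f x| < e) &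
      (forall t f, 0 <= t -> continuous f ->
         (exists M : R, forall x, `|f x| <= M) ->
         continuous (fun x => integ (P t x) f))]].

Definition coupling (mu nu : probability Borel R)
  (g : probability (Borel * Borel)%type R) :=
  (forall A : set Borel, measurable A -> g (fst @^-1` A) = mu A) /\
  (forall A : set Borel, measurable A -> g (snd @^-1` A) = nu A).

Definition W (cost : E -> E -> R) (mu nu : probability Borel R) : R :=
  fine (ereal_inf [set v | exists g, coupling mu nu g /\
          v = (\int[g]_p (cost p.1 p.2)%:E)%E]).

Definition Fc (P : R -> E -> probability Borel R) (c : R) (m : E -> E -> R)
  : E -> E -> R :=
  fun x y => fine (ereal_sup [set v | exists t : R, 0 <= t /\
          v = ((c `^ t) * W m (P t x) (P t y))%:E]).

(* 1-bounded pseudometrics, and the lower semicontinuous ones (the lattice P) *)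
Definition pseudometric1 (m : E -> E -> R) :=
  [/\ forall x y, 0 <= m x y <= 1,
      forall x, m x x = 0,
      forall x y, m x y = m y x &
      forall x y z, m x z <= m x y + m y z].
Definition lsc_pseudometric (m : E -> E -> R) :=
  pseudometric1 m /\
  lower_semicontinuous (fun p : E * E => (m p.1 p.2)%:E).

Fixpoint delta (P : R -> E -> probability Borel R) (obs : E -> R) (c : R)
  (n : nat) : E -> E -> R :=
  match n with
  | 0 => fun x y => `|obs x - obs y|
  | n'.+1 => Fc P c (delta P obs c n')
  end.
Definition delta_bar (P : R -> E -> probability Borel R) (obs : E -> R)
  (c : R) : E -> E -> R :=
  fun x y => fine (ereal_sup (range (fun n => (delta P obs c n x y)%:E))).

End Defs.

(* Main.v *)
Require Import Defs.
From HB Require Import structures.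
From mathcomp Require Import all_boot all_order all_algebra.
From mathcomp Require Import all_classical all_reals all_analysis.
From mathcomp Require Import measurable_realfun lebesgue_integral.
From mathcomp Require Import lra.
Import Order.TTheory GRing.Theory Num.Theory.
Import numFieldNormedType.Exports.
Local Open Scope classical_set_scope.
Local Open Scope ring_scope.

Section Helpers.
Context {R : realType} {E : ptopologicalType}.
Local Open Scope ereal_scope.

Lemma int_mono d (T : measurableType d) (mu : {measure set T -> \bar R})
  (f1 f2 : T -> \bar R) :
  (forall x, 0 <= f1 x) -> (forall x, f1 x <= f2 x) ->
  \int[mu]_x f1 x <= \int[mu]_x f2 x.
Proof.
move=> f10 f12.
have f20 : forall x, 0 <= f2 x by move=> x; exact: le_trans (f10 x) (f12 x).
rewrite !ge0_integralTE //; apply: le_ereal_sup => _ [h /= hf <-].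
by exists h => //= x; exact: le_trans (hf x) (f12 x).
Qed.

Lemma int_le1 d (T : measurableType d) (mu : probability T R)
  (f : T -> \bar R) :
  (forall x, 0 <= f x <= 1) -> \int[mu]_x f x <= 1.
Proof.
move=> f01.
apply: le_trans (@int_mono _ _ mu f (cst 1) _ _) _.
- by move=> x; case/andP: (f01 x).
- by move=> x; case/andP: (f01 x).
rewrite integral_cst // mul1e; exact: probability_le1.
Qed.

Local Close Scope ereal_scope.

Definition bnd (m : E -> E -> R) := forall x y, 0 <= m x y <= 1.

Lemma W_bnd (m : E -> E -> R) mu nu : bnd m -> 0 <= W m mu nu <= 1.
Proof.
move=> hm; rewrite /W.
set S := [set v | _].
have Sb : forall v, S v -> (0 <= v <= 1)%E.
  move=> v [g [_ ->]]; apply/andP; split.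
    by apply: integral_ge0 => p _; rewrite lee_fin; case/andP: (hm p.1 p.2).
  by apply: int_le1 => p; rewrite !lee_fin; exact: hm.
have inf0 : (0 <= ereal_inf S)%E.
  by apply: le_ereal_inf_tmp => v /Sb /andP[].
have [[v Sv]|nS] := pselect (exists v, S v).
  have inf1 : (ereal_inf S <= 1)%E.
    apply: le_trans (ereal_inf_lbound Sv) _; by case/andP: (Sb v Sv).
  have fin : ereal_inf S \is a fin_num.
    by rewrite ge0_fin_numE // (le_lt_trans inf1) // ltry.
  apply/andP; split.
    by rewrite -lee_fin fineK.
  by rewrite -lee_fin fineK.
have -> : S = set0 by apply/seteqP; split => v // Sv; apply: nS; exists v.
by rewrite ereal_inf0 /= lexx ler01.
Qed.

Lemma W_mono (m1 m2 : E -> E -> R) mu nu : bnd m1 -> bnd m2 ->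
  (forall x y, m1 x y <= m2 x y) -> W m1 mu nu <= W m2 mu nu.
Proof.
move=> h1 h2 h12; rewrite /W.
set S1 := [set v | _]; set S2 := [set v | _].
have [[g hg]|nS] := pselect (exists g, coupling mu nu g).
  have S1b : forall v, S1 v -> (0 <= v <= 1)%E.
    move=> v [g' [_ ->]]; apply/andP; split.
      by apply: integral_ge0 => p _; rewrite lee_fin; case/andP: (h1 p.1 p.2).
    by apply: int_le1 => p; rewrite !lee_fin; exact: h1.
  have S2b : forall v, S2 v -> (0 <= v <= 1)%E.
    move=> v [g' [_ ->]]; apply/andP; split.
      by apply: integral_ge0 => p _; rewrite lee_fin; case/andP: (h2 p.1 p.2).
    by apply: int_le1 => p; rewrite !lee_fin; exact: h2.
  have S1g : S1 (\int[g]_p (m1 p.1 p.2)%:E)%E by exists g.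
  have S2g : S2 (\int[g]_p (m2 p.1 p.2)%:E)%E by exists g.
  have fin1 : ereal_inf S1 \is a fin_num.
    rewrite ge0_fin_numE; last by apply: le_ereal_inf_tmp => v /S1b /andP[].
    apply: le_lt_trans (ereal_inf_lbound S1g) _.
    by case/andP: (S1b _ S1g) => _ /le_lt_trans ->//; rewrite ltry.
  have fin2 : ereal_inf S2 \is a fin_num.
    rewrite ge0_fin_numE; last by apply: le_ereal_inf_tmp => v /S2b /andP[].
    apply: le_lt_trans (ereal_inf_lbound S2g) _.
    by case/andP: (S2b _ S2g) => _ /le_lt_trans ->//; rewrite ltry.
  apply: fine_le => //; apply: le_ereal_inf_tmp => _ [g' [cg' ->]].
  apply: le_trans (ereal_inf_lbound (_ : S1 (\int[g']_p (m1 p.1 p.2)%:E)%E)) _.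
    by exists g'.
  apply: int_mono => p; rewrite lee_fin //; first by case/andP: (h1 p.1 p.2).
have -> : S1 = set0 by apply/seteqP; split => v // [g' [cg _]]; apply: nS; exists g'.
have -> : S2 = set0 by apply/seteqP; split => v // [g' [cg _]]; apply: nS; exists g'.
by [].
Qed.

Lemma powR_le1' (c t : R) : 0 < c -> c < 1 -> 0 <= t -> c `^ t <= 1.
Proof.
move=> c0 c1 t0; rewrite -(powRr0 c); apply: ger_powR => //.
by rewrite c0 ltW.
Qed.

Lemma Fc_bnd P (c : R) (m : E -> E -> R) : 0 < c -> c < 1 -> bnd m ->
  bnd (Fc P c m).
Proof.
move=> c0 c1 hm x y; rewrite /Fc.
set S := [set v | _].
have Sb : forall v, S v -> (0 <= v <= 1)%E.
  move=> v [t [t0 ->]]; rewrite !lee_fin.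
  have := W_bnd m (P t x) (P t y) hm => /andP[w0 w1].
  rewrite mulr_ge0 ?powR_ge0 //=.
  by rewrite -[1]mul1r ler_pM ?powR_ge0 // powR_le1'.
have S0 : S ((c `^ 0 * W m (P 0 x) (P 0 y))%:E) by exists 0.
have sup0 : (0 <= ereal_sup S)%E.
  by apply: ereal_sup_ge; exists (c `^ 0 * W m (P 0 x) (P 0 y))%:E => //; case/andP: (Sb _ S0).
have sup1 : (ereal_sup S <= 1)%E by apply: ge_ereal_sup => v /Sb /andP[].
have fin : ereal_sup S \is a fin_num.
  by rewrite ge0_fin_numE // (le_lt_trans sup1) // ltry.
by apply/andP; split; rewrite -lee_fin fineK.
Qed.

Lemma Fc_mono P (c : R) (m1 m2 : E -> E -> R) : 0 < c -> c < 1 ->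
  bnd m1 -> bnd m2 -> (forall x y, m1 x y <= m2 x y) ->
  forall x y, Fc P c m1 x y <= Fc P c m2 x y.
Proof.
move=> c0 c1 h1 h2 h12 x y; rewrite /Fc.
set S1 := [set v | _]; set S2 := [set v | _].
have Sb : forall m, bnd m ->
    forall v, [set v | exists t : R, (0 <= t)%R /\
          v = ((c `^ t) * W m (P t x) (P t y))%:E] v -> (0 <= v <= 1)%E.
  move=> m hm v [t [t0 ->]]; rewrite !lee_fin.
  have := W_bnd m (P t x) (P t y) hm => /andP[w0 w1].
  rewrite mulr_ge0 ?powR_ge0 //=.
  by rewrite -[1]mul1r ler_pM ?powR_ge0 // powR_le1'.
have fin : forall m, bnd m -> ereal_sup [set v | exists t : R, (0 <= t)%R /\
          v = ((c `^ t) * W m (P t x) (P t y))%:E] \is a fin_num.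
  move=> m hm.
  have S0 : [set v | exists t : R, (0 <= t)%R /\
          v = ((c `^ t) * W m (P t x) (P t y))%:E]
          ((c `^ 0 * W m (P 0 x) (P 0 y))%:E) by exists 0.
  have sup0 : (0 <= ereal_sup [set v | exists t : R, (0 <= t)%R /\
          v = ((c `^ t) * W m (P t x) (P t y))%:E])%E.
    by apply: ereal_sup_ge; exists (c `^ 0 * W m (P 0 x) (P 0 y))%:E => //; case/andP: (Sb _ hm _ S0).
  have sup1 : (ereal_sup [set v | exists t : R, (0 <= t)%R /\
          v = ((c `^ t) * W m (P t x) (P t y))%:E] <= 1)%E.
    by apply: ge_ereal_sup => v Sv; case/andP: (Sb _ hm _ Sv).
  by rewrite ge0_fin_numE // (le_lt_trans sup1) // ltry.
apply: fine_le; [exact: fin|exact: fin|].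
apply: ge_ereal_sup => _ [t [t0 ->]]; apply: ereal_sup_ge.
exists ((c `^ t * W m2 (P t x) (P t y))%:E); first by exists t.
by rewrite lee_fin ler_wpM2l ?powR_ge0 // W_mono.
Qed.

End Helpers.

Theorem mainTheorem5 (R : realType) (E : ptopologicalType)
  (hE : hausdorff_space E) (lcE : locally_compact [set: E])
  (scE : @second_countable E)
  (P : R -> E -> probability (@Borel E) R) (hP : feller_markov P)
  (obs : E -> R) (obs_cont : continuous obs)
  (obs01 : forall x, 0 <= obs x <= 1)
  (c : R) (c0 : 0 < c) (c1 : c < 1)
  (m : E -> E -> R) (mP : lsc_pseudometric m)
  (mfix : Fc P c m = m)
  (mobs : forall x y, `|obs x - obs y| <= m x y) :
  forall x y, delta_bar P obs c x y <= m x y.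
Proof.
have hm : bnd m by case: mP => -[].
have hd : forall n, bnd (delta P obs c n) /\
    forall x y, delta P obs c n x y <= m x y.
  elim=> [|n [hb hle]] /=.
    split=> // x y; rewrite normr_ge0 /=.
    have := obs01 x; have := obs01 y => /andP[a b] /andP[a' b'].
    rewrite ler_norml; apply/andP; split; lra.
  split; first exact: Fc_bnd.
  by move=> x y; rewrite -mfix; apply: Fc_mono.
move=> x y; rewrite /delta_bar.
set S := (X in ereal_sup X).
have sup1 : (ereal_sup S <= (m x y)%:E)%E.
  by apply: ge_ereal_sup => _ [n _ <-]; rewrite lee_fin; case: (hd n) => _ ->.
have sup0 : (0 <= ereal_sup S)%E.
  apply: ereal_sup_ge; exists (delta P obs c 0 x y)%:E; first by exists 0%N.
  by rewrite lee_fin /=.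
have fin : ereal_sup S \is a fin_num.
  by rewrite ge0_fin_numE // (le_lt_trans sup1) // ltry.
by rewrite -lee_fin fineK.
Qed.
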